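(* Consider the procurement setting and the mechanism BFM-SWM described in the context, run with arbitrary inputs $B>0$, $\alpha>1$, $\beta>1$, $\epsilon>0$, $\ell\in\{1,2\}$. Then BFM-SWM is budget-feasible, i.e. its output $S^*$ with payments $p(u)$, $u\in S^*$, satisfies $p(S^* )=\sum_{u\in S^*}p(u)\le B$. It is obviously strategyproof (hence truthful), individually rational, and has non-negative auctioneer surplus, i.e. $v(S^* )-p(S^* )\ge 0$. Moreover, treating $\alpha$ as a constant and counting each evaluation of $v$ as one step, it runs in $\mathcal{O}\!\left(n\log\frac{OPT}{\epsilon}\right)$ time, where $OPT=\max\{v(S)-c(S): S\subseteq\mathcal{N},\ c(S)\le B\}$ is the welfare of an optimal solution.
   Context: Setting. $\mathcal{N}$ is a finite set of $n$ sellers, each owning one item. The auctioneer has a valuation $v:2^{\mathcal{N}}\to\mathbb{R}_{\ge 0}$ with $v(\emptyset)=0$ that is submodular (for $X\subseteq Y\subseteq\mathcal{N}$ and $u\notin Y$, $v(u\mid Y)\le v(u\mid X)$), not necessarily monotone, accessed through a value oracle; here $v(S\mid T)=v(S\cup T)-v(T)$, $v(u\mid T)=v(\{u\}\mid T)$ and $v(u)=v(\{u\})$. Each seller $u$ has a private cost $c(u)\ge 0$; $c(X)=\sum_{u\in X}c(u)$, $p(X)=\sum_{u\in X}p(u)$. $B>0$ is the budget, $[\ell]=\{1,\dots,\ell\}$. A seller offered a price $q$ either accepts or rejects; a truthful seller accepts iff $c(u)\le q$. A seller's utility is $p(u)-c(u)$ if it wins with payment $p(u)$ and $0$ otherwise.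 Mechanism BFM-SWM (inputs $B$, $\alpha>1$, $\beta>1$, $\epsilon>0$, $\ell\in\{1,2\}$): 1. Offer every seller the price $B$; let $R$ be the set of sellers who accept, and set $p(u)=B$ for $u\in R$. 2. Set $t=0$, $\rho_0=\epsilon/\alpha$, $u^*=\emptyset$ ($u^*$ is a set of at most one seller), and $S_{i,0}=\emptyset$ for $i\in[\ell]$. 3. Repeat rounds: set $t\leftarrow t+1$, $\rho_t=\alpha\rho_{t-1}$, $S_{i,t}=\emptyset$ for all $i\in[\ell]$. Process the sellers $u\in R\setminus(\bigcup_{i=1}^{\ell}S_{i,t-1}\cup u^* )$ one at a time in a fixed order. For each such $u$: pick $j\in\arg\max_{i\in[\ell]}v(u\mid S_{i,t})$ (current contents); update $p(u)\leftarrow\min\{p(u),\ v(u\mid S_{j,t})/(\beta+\rho_t/B)\}$ and offer $p(u)$ to $u$. If $u$ accepts: if $v(S_{j,t}\cup\{u\})-p(S_{j,t}\cup\{u\})>\rho_t$ (current prices), set $u^*\leftarrow\{u\}$ and end the round immediately; otherwise add $u$ to $S_{j,t}$. If $u$ rejects, remove $u$ from $R$. After the round, stop if $R\setminus\left(\bigcup_{i=1}^{\ell}(S_{i,t-1}\cup S_{i,t})\cup u^*\right)=\emptyset$; otherwise start another round. 4. Let $M$ be the final value of $t$. Output $S^*\in\arg\max_{A\in\{S_{i,t}: i\in[\ell],\ t\in\{M-1,M\}\}\cup\{u^*\}}\big(v(A)-p(A)\big)$, paying each $u\in S^*$ its current price $p(u)$. Obvious strategyproofness: at every point at which a seller's action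 under the truthful strategy differs from its action under some deviating strategy, the worst utility it can obtain by continuing truthfully is at least the best utility it can obtain by deviating (over all behaviours of the other sellers). Individual rationality: a truthful seller never obtains negative utility. *)

(* Defs.v *)
From HB Require Import structures.
From mathcomp Require Import all_boot all_order all_algebra.
From mathcomp Require Import reals exp.
Set Implicit Arguments. Unset Strict Implicit. Unset Printing Implicit Defensive.
Import Order.TTheory GRing.Theory Num.Theory.
Local Open Scope ring_scope.

(* Sellers are the ordinals 'I_n; the "fixed order" of the mechanism is the
   order of enum 'I_n (w.l.o.g., since v and c are arbitrary). *)

Section BFM.
Variable R : realType.
Variable n : nat.
Local Notation seller := 'I_n.

(* A public event: seller u was offered price q and answered a (true = accept). *)
Definition event := (seller * R * bool)%type.
Definition history := seq event.
(* A (behaviour) strategy of a seller: given the history so far and the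
   offered price, accept or reject. *)
Definition strategy := history -> R -> bool.
Definition profile := seller -> strategy.

Definition truthful (c : seller -> R) (u : seller) : strategy :=
  fun _ q => c u <= q.

Definition upd (sig : profile) (i : seller) (s : strategy) : profile :=
  fun j => if j == i then s else sig j.

Definition submodular (v : {set seller} -> R) : Prop :=
  forall (X Y : {set seller}) (u : seller), X \subset Y -> u \notin Y ->
    v (u |: Y) - v Y <= v (u |: X) - v X.

Definition psum (p : seller -> R) (A : {set seller}) : R := \sum_(w in A) p w.

Definition csum (c : seller -> R) (A : {set seller}) : R := \sum_(w in A) c w.

(* OPT = max { v(S) - c(S) : c(S) <= B } (the empty set is feasible, value 0). *)
Definition OPT (v : {set seller} -> R) (c : seller -> R) (B : R) : R :=
  \big[Num.max/0]_(S : {set seller} | csum c S <= B) (v S - csum c S).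

(* State of the mechanism. st_Sprev i = S_{i,t-1}, st_Scur i = S_{i,t}
   (i < l), st_steps counts oracle evaluations of v plus price offers. *)
Record state := St {
  st_hist : history;
  st_p : seller -> R;
  st_R : {set seller};
  st_ustar : {set seller};
  st_Sprev : nat -> {set seller};
  st_Scur : nat -> {set seller};
  st_rho : R;
  st_steps : nat }.

(* first index in [0, l) maximizing f (ties broken towards the smallest index) *)
Definition argmax_first (l : nat) (f : nat -> R) : nat :=
  foldl (fun j i => if f j < f i then i else j) 0%N (iota 1 l.-1).

Variables (v : {set seller} -> R) (B alpha beta eps : R) (l : nat) (sig : profile).

Definition unionS (S : nat -> {set seller}) : {set seller} :=
  \bigcup_(i < l) S i.

Definition step1_one (st : state) (u : seller) : state :=
  let a := sig u (st_hist st) B in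
  St (rcons (st_hist st) (u, B, a)) (st_p st)
     (if a then u |: st_R st else st_R st)
     (st_ustar st) (st_Sprev st) (st_Scur st) (st_rho st) (st_steps st).+1.

Definition init_state : state :=
  foldl step1_one
    (St [::] (fun _ => B) set0 set0 (fun _ => set0) (fun _ => set0)
        (eps / alpha) 0%N)
    (enum 'I_n).

(* Processing one seller u inside a round; the boolean flags that the round
   has ended (u* was set). *)
Definition process (sd : state * bool) (u : seller) : state * bool :=
  let: (st, done) := sd in
  if done then sd else
  let S := st_Scur st in
  let m := fun i => v (u |: S i) - v (S i) in            (* 2 evaluations each *)
  let j := argmax_first l m in
  let q := Num.min (st_p st u) (m j / (beta + st_rho st / B)) in
  let p' := fun w => if w == u then q else st_p st w in
  let a := sig u (st_hist st) q in                      (* 1 offer *)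
  let h' := rcons (st_hist st) (u, q, a) in
  let k := (st_steps st + 2 * l + 1)%N in
  if a then
    if st_rho st < v (u |: S j) - psum p' (u |: S j) then  (* 1 evaluation *)
      (St h' p' (st_R st) [set u] (st_Sprev st) S (st_rho st) k.+1, true)
    else
      (St h' p' (st_R st) (st_ustar st) (st_Sprev st)
          (fun i => if i == j then u |: S i else S i) (st_rho st) k.+1, false)
  else (St h' p' (st_R st :\ u) (st_ustar st) (st_Sprev st) S (st_rho st) k,
        false).

Definition round (st : state) : state :=
  let Sprev := st_Scur st in
  let todo := [seq u <- enum 'I_n |
                u \in st_R st :\: (unionS Sprev :|: st_ustar st)] in
  let st0 := St (st_hist st) (st_p st) (st_R st) (st_ustar st) Sprev
                (fun _ => set0) (alpha * st_rho st) (st_steps st) in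
  (foldl process (st0, false) todo).1.

Definition state_after (t : nat) : state := iter t round init_state.

Definition stopped (st : state) : bool :=
  st_R st :\: (unionS (st_Sprev st) :|: unionS (st_Scur st) :|: st_ustar st)
    == set0.

Definition first_stop (M : nat) : Prop :=
  (0 < M)%N /\ stopped (state_after M) /\
  forall t, (0 < t < M)%N -> ~~ stopped (state_after t).

Definition surplus (st : state) (A : {set seller}) : R :=
  v A - psum (st_p st) A.

(* candidates {S_{i,t} : i in [l], t in {M-1, M}} and u* *)
Definition candidates (st : state) : seq {set seller} :=
  [seq st_Sprev st i | i <- iota 0 l] ++ [seq st_Scur st i | i <- iota 0 l]
  ++ [:: st_ustar st].

Definition best (st : state) : {set seller} :=
  let cs := candidates st in
  foldl (fun X A => if surplus st X < surplus st A then A else X)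
        (head set0 cs) (behead cs).

Definition winners (M : nat) : {set seller} := best (state_after M).
Definition payment (M : nat) (u : seller) : R := st_p (state_after M) u.
(* total number of steps: offers + evaluations of v (step 4 evaluates v once
   per candidate) *)
Definition total_steps (M : nat) : nat :=
  (st_steps (state_after M) + size (candidates (state_after M)))%N.
Definition final_history (M : nat) : history := st_hist (state_after M).

Definition reaches (M : nat) (h : history) (i : seller) (q : R) : Prop :=
  exists (a : bool) (s : history), final_history M = rcons h (i, q, a) ++ s.

End BFM.

Section Props.
Variable R : realType.
Variable n : nat.
Variables (v : {set 'I_n} -> R) (c : 'I_n -> R) (B alpha beta eps : R) (l : nat).

Local Notation first_stop sig M := (first_stop v B alpha beta eps l sig M).

Definition utility (sig : profile R n) (M : nat) (i : 'I_n) : R :=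
  if i \in winners v B alpha beta eps l sig M
  then payment v B alpha beta eps l sig M i - c i else 0.

Definition terminates : Prop :=
  forall sig : profile R n, exists M, first_stop sig M.

Definition budget_feasible : Prop :=
  forall (sig : profile R n) M, first_stop sig M ->
    psum (payment v B alpha beta eps l sig M)
         (winners v B alpha beta eps l sig M) <= B.

Definition nonneg_surplus : Prop :=
  forall (sig : profile R n) M, first_stop sig M ->
    0 <= v (winners v B alpha beta eps l sig M)
         - psum (payment v B alpha beta eps l sig M)
                (winners v B alpha beta eps l sig M).

Definition individually_rational : Prop :=
  forall (sig : profile R n) (i : 'I_n) M,
    sig i = truthful c i -> first_stop sig M -> 0 <= utility sig M i.

Definition truthful_mech : Prop :=
  forall (sig : profile R n) (i : 'I_n) (s' : strategy R n) M1 M2,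
    first_stop (upd sig i (truthful c i)) M1 ->
    first_stop (upd sig i s') M2 ->
    utility (upd sig i s') M2 i <= utility (upd sig i (truthful c i)) M1 i.

(* obvious strategyproofness: at every decision node h (seller i offered q)
   reached both under truthful play of i and under the deviating strategy s',
   at which the two strategies prescribe different actions, every outcome of
   truthful play (any behaviour of the others) is at least as good for i as
   every outcome of deviating (any behaviour of the others). *)
Definition obviously_strategyproof : Prop :=
  forall (i : 'I_n) (s' : strategy R n) (sig1 sig2 : profile R n)
         (M1 M2 : nat) (h : history R n) (q : R),
    sig1 i = truthful c i -> sig2 i = s' ->
    first_stop sig1 M1 -> first_stop sig2 M2 ->
    reaches v B alpha beta eps l sig1 M1 h i q ->
    reaches v B alpha beta eps l sig2 M2 h i q ->
    s' h q != truthful c i h q ->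
    utility sig2 M2 i <= utility sig1 M1 i.

Definition all_truthful : profile R n := fun u => truthful c u.

Definition runtime_bound (C : R) : Prop :=
  forall M, first_stop all_truthful M ->
    (total_steps v B alpha beta eps l all_truthful M)%:R
      <= C * (n.+1)%:R * (1 + ln (1 + OPT v c B / eps)).

End Props.

(* Main.v *)
Require Import Defs.
From HB Require Import structures.
From mathcomp Require Import all_boot all_order all_algebra.
From mathcomp Require Import reals exp.
From mathcomp Require Import ring lra zify.
Import Order.TTheory GRing.Theory Num.Theory.
Local Open Scope ring_scope.
Set Implicit Arguments. Unset Strict Implicit. Unset Printing Implicit Defensive.

Section Generic.
Variables (R : realType) (n : nat).

Definition hist_ok (sig : profile R n) (H : history R n) : Prop :=
  forall H1 e H2, H = H1 ++ e :: H2 -> sig e.1.1 H1 e.1.2 = e.2.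

Lemma hist_ok_nil sig : hist_ok sig [::].
Proof. by move=> [|? ?] e H2. Qed.

Lemma hist_ok_cat sig H s : hist_ok sig (H ++ s) -> hist_ok sig H.
Proof.
move=> h H1 e H2 E; apply: (h H1 e (H2 ++ s)).
by rewrite E -catA.
Qed.

Lemma hist_ok_rcons sig H e : hist_ok sig H -> sig e.1.1 H e.1.2 = e.2 ->
  hist_ok sig (rcons H e).
Proof.
move=> h he H1 e' H2; case/lastP: H2 => [|H2 x].
  rewrite cats1 => /rcons_inj [<- <-] //.
rewrite -rcons_cons -rcons_cat => /rcons_inj [E _].
exact: (h H1 e' H2 E).
Qed.

Lemma hist_ok_mem sig H w q a : hist_ok sig H -> (w, q, a) \in H ->
  exists H1, sig w H1 q = a.
Proof.
move=> h hm; case/splitPr: hm h => H1 H2 h; exists H1; exact: (h H1 (w,q,a) H2).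
Qed.

Lemma psum_eq (p p' : 'I_n -> R) (X : {set 'I_n}) : (forall w, w \in X -> p w = p' w) ->
  psum p X = psum p' X.
Proof. by move=> h; apply: eq_bigr. Qed.

Lemma psumU1 (p : 'I_n -> R) u (X : {set 'I_n}) : u \notin X -> psum p (u |: X) = p u + psum p X.
Proof. by move=> h; rewrite /psum big_setU1. Qed.

Lemma psum1 (p : 'I_n -> R) u : psum p [set u] = p u.
Proof. by rewrite /psum big_set1. Qed.

Lemma psum0 (p : 'I_n -> R) : psum p set0 = 0.
Proof. by rewrite /psum big_set0. Qed.

End Generic.

Section Mech.
Variables (R : realType) (n : nat) (v : {set 'I_n} -> R) (B alpha beta eps : R) (l : nat).
Hypotheses (v0 : v set0 = 0) (vge0 : forall S, 0 <= v S) (vsub : submodular v)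
  (B0 : 0 < B) (alpha1 : 1 < alpha) (beta1 : 1 < beta) (eps0 : 0 < eps)
  (hl : (l = 1 \/ l = 2)%N).

Definition mS (st : state R n) u i := v (u |: st_Scur st i) - v (st_Scur st i).
Definition jf st u := argmax_first l (mS st u).
Definition dd (st : state R n) := beta + st_rho st / B.
Definition qf st u := Num.min (st_p st u) (mS st u (jf st u) / dd st).
Definition pf st u : 'I_n -> R := fun w => if w == u then qf st u else st_p st w.

Definition pg (a : bool) (st : state R n) (u : 'I_n) : state R n * bool :=
  let S := st_Scur st in
  let j := jf st u in
  let q := qf st u in
  let p' := pf st u in
  let h' := rcons (st_hist st) (u, q, a) in
  let k := (st_steps st + 2 * l + 1)%N in
  if a then
    if st_rho st < v (u |: S j) - psum p' (u |: S j) then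
      (St h' p' (st_R st) [set u] (st_Sprev st) S (st_rho st) k.+1, true)
    else
      (St h' p' (st_R st) (st_ustar st) (st_Sprev st)
          (fun i => if i == j then u |: S i else S i) (st_rho st) k.+1, false)
  else (St h' p' (st_R st :\ u) (st_ustar st) (st_Sprev st) S (st_rho st) k, false).

Lemma processE sig st u :
  process v B beta l sig (st, false) u = pg (sig u (st_hist st) (qf st u)) st u.
Proof. by []. Qed.

Definition s1g (a : bool) (st : state R n) (u : 'I_n) : state R n :=
  St (rcons (st_hist st) (u, B, a)) (st_p st)
     (if a then u |: st_R st else st_R st)
     (st_ustar st) (st_Sprev st) (st_Scur st) (st_rho st) (st_steps st).+1.

Lemma step1E sig st u : step1_one B sig st u = s1g (sig u (st_hist st) B) st u.
Proof. by []. Qed.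

Definition s0_of (st : state R n) :=
  St (st_hist st) (st_p st) (st_R st) (st_ustar st) (st_Scur st)
     (fun _ => set0) (alpha * st_rho st) (st_steps st).
Definition todo_of (st : state R n) :=
  [seq u <- enum 'I_n | u \in st_R st :\: (unionS l (st_Scur st) :|: st_ustar st)].

Lemma roundE sig st : round v B alpha beta l sig st =
  (foldl (process v B beta l sig) (s0_of st, false) (todo_of st)).1.
Proof. by []. Qed.

Lemma argmax_lt (f : nat -> R) : (argmax_first l f < l)%N.
Proof. by case: hl => ->; rewrite /argmax_first //=; case: ifP. Qed.

Lemma unionSP (S : nat -> {set 'I_n}) w :
  reflect (exists2 i, (i < l)%N & w \in S i) (w \in unionS l S).
Proof.
apply: (iffP bigcupP) => [[i _ h]|[i hi h]]; first by exists i.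
by exists (Ordinal hi).
Qed.

Definition Vmax := \sum_(S : {set 'I_n}) v S.

Lemma Vmax_ge S : v S <= Vmax.
Proof.
rewrite /Vmax (bigD1 S) //= lerDl; apply: sumr_ge0 => *; exact: vge0.
Qed.

Lemma Vmax_ge0 : 0 <= Vmax.
Proof. exact: le_trans (vge0 set0) (Vmax_ge set0). Qed.

Definition goodE (p : 'I_n -> R) X :=
  exists r, [/\ 0 < r, (beta + r / B) * psum p X <= v X & v X - psum p X <= r].
Definition goodC rho (p : 'I_n -> R) X :=
  (beta + rho / B) * psum p X <= v X /\ v X - psum p X <= rho.

Lemma goodE_bounds p X : goodE p X -> psum p X <= B /\ 0 <= v X - psum p X.
Proof.
have hB := B0; have hb := beta1.
case=> r [r0 h1 h2]; set P := psum p X in h1 h2 *.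
have vX := vge0 X.
set s := r / B in h1.
have s0 : 0 < s by rewrite divr_gt0.
have rE : r = s * B by rewrite /s divfK // gt_eqF.
rewrite rE in h2.
clearbody P s.
case: (lerP P 0) => hP; first by split; lra.
split.
  case: (lerP P B) => // hPB; exfalso.
  have h3: 0 < s * (P - B) by apply: mulr_gt0; lra.
  have h4: 0 < (beta - 1) * P by apply: mulr_gt0; lra.
  nra.
have h4: 0 <= (beta + s - 1) * P by apply: mulr_ge0; lra.
nra.
Qed.

Lemma goodC_E rho p X : 0 < rho -> goodC rho p X -> goodE p X.
Proof. by move=> r0 [h1 h2]; exists rho. Qed.

Definition inSets (st : state R n) w : Prop :=
  (exists2 i, (i < l)%N & w \in st_Sprev st i) \/
  (exists2 i, (i < l)%N & w \in st_Scur st i) \/ w \in st_ustar st.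

Record Inv (sig : profile R n) (st : state R n) : Prop := {
  i_rho : 0 < st_rho st;
  i_p : forall w, -Vmax <= st_p st w <= B;
  i_prev : forall i, (i < l)%N -> goodE (st_p st) (st_Sprev st i);
  i_cur : forall i, (i < l)%N -> goodC (st_rho st) (st_p st) (st_Scur st i);
  i_ustar : psum (st_p st) (st_ustar st) <= B /\
            0 <= v (st_ustar st) - psum (st_p st) (st_ustar st);
  i_hist : hist_ok sig (st_hist st);
  i_price : forall w q a, (w, q, a) \in st_hist st -> st_p st w <= q;
  i_rej : forall w q, (w, q, false) \in st_hist st -> w \notin st_R st;
  i_inR : forall w, inSets st w -> w \in st_R st;
  i_acc : forall w, inSets st w -> (w, st_p st w, true) \in st_hist st }.

Lemma inv_step sig st u a (st' : state R n) :
  Inv sig st -> u \in st_R st -> ~ inSets st u ->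
  sig u (st_hist st) (qf st u) = a ->
  st_hist st' = rcons (st_hist st) (u, qf st u, a) ->
  st_p st' = pf st u -> st_rho st' = st_rho st -> st_Sprev st' = st_Sprev st ->
  st_R st' = (if a then st_R st else st_R st :\ u) ->
  (forall w, inSets st' w -> inSets st w \/ (w = u /\ a)) ->
  (forall i, (i < l)%N -> goodC (st_rho st) (pf st u) (st_Scur st' i)) ->
  psum (pf st u) (st_ustar st') <= B /\
    0 <= v (st_ustar st') - psum (pf st u) (st_ustar st') ->
  (-Vmax <= qf st u) ->
  Inv sig st'.
Proof.
move=> I uR unS ha eh ep er eP eR eS hc hu hq.
have qle : qf st u <= st_p st u by rewrite /qf ge_min lexx.
have pfle w : pf st u w <= st_p st w.
  by rewrite /pf; case: eqP => [->|].
have pfne w : w != u -> pf st u w = st_p st w by rewrite /pf => /negbTE ->.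
split.
- by rewrite er; exact: (i_rho I).
- move=> w; rewrite ep /pf; case: eqP => [_|_]; last exact: (i_p I).
  by rewrite hq /=; apply: le_trans qle _; case/andP: (i_p I u).
- move=> i hi; rewrite ep eP.
  case: (i_prev I hi) => r [r0 h1 h2]; exists r.
  rewrite -(psum_eq (p:=st_p st)); first by split.
  move=> w hw; rewrite pfne //; apply/eqP => wu; apply: unS; left; exists i => //.
  by rewrite -wu.
- by move=> i hi; rewrite er ep; exact: hc.
- by rewrite ep.
- rewrite eh; apply: hist_ok_rcons => //; exact: (i_hist I).
- move=> w q a'; rewrite eh ep mem_rcons in_cons => /orP [/eqP [-> -> _]|].
    by rewrite /pf eqxx.
  by move=> hm; apply: le_trans (pfle w) _; exact: (i_price I hm).
- move=> w q; rewrite eh eR mem_rcons in_cons => /orP [/eqP [-> _ <-]|].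
    by rewrite !inE eqxx.
  move=> hm; have hn := i_rej I hm; case: (a) => //=; rewrite !inE (negbTE hn) andbF //.
- move=> w /eS [hw|[-> ha']]; last by rewrite eR ha'.
  have wR := i_inR I hw; rewrite eR; case: (a) => //; rewrite !inE wR andbT.
  by apply/eqP => wu; apply: unS; rewrite -wu.
- move=> w /eS [hw|[-> ha']].
    rewrite eh ep mem_rcons in_cons pfne; first by rewrite (i_acc I hw) orbT.
    by apply/eqP => wu; apply: unS; rewrite -wu.
  by rewrite eh ep mem_rcons in_cons /pf eqxx ha' eqxx.
Qed.


Section StepFacts.
Variables (sig : profile R n) (st : state R n) (u : 'I_n).
Hypotheses (I : Inv sig st) (unS : ~ inSets st u).

Lemma dd_gt1 : 1 < dd st.
Proof.
have := beta1; have : 0 <= st_rho st / B by rewrite divr_ge0 // ltW // (i_rho I).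
rewrite /dd => *; lra.
Qed.

Lemma qf_le_p : qf st u <= st_p st u.
Proof. by rewrite /qf ge_min lexx. Qed.

Lemma qf_le_m : qf st u * dd st <= mS st u (jf st u).
Proof.
have d0 : 0 < dd st by have := dd_gt1; lra.
by rewrite -ler_pdivlMr // /qf ge_min lexx orbT.
Qed.

Lemma jf_lt : (jf st u < l)%N.
Proof. exact: argmax_lt. Qed.

Lemma u_notin_cur i : (i < l)%N -> u \notin st_Scur st i.
Proof. by move=> hi; apply/negP => h; apply: unS; right; left; exists i. Qed.

Lemma u_notin_prev i : (i < l)%N -> u \notin st_Sprev st i.
Proof. by move=> hi; apply/negP => h; apply: unS; left; exists i. Qed.

Lemma u_notin_ustar : u \notin st_ustar st.
Proof. by apply/negP => h; apply: unS; right; right. Qed.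

Lemma psum_pf (X : {set 'I_n}) : u \notin X -> psum (pf st u) X = psum (st_p st) X.
Proof.
move=> hX; apply: psum_eq => w hw; rewrite /pf; case: eqP => // wu.
by rewrite -wu hw in hX.
Qed.

Lemma qf_ge : -Vmax <= qf st u.
Proof.
have d1 := dd_gt1; have V0 := Vmax_ge0.
rewrite /qf le_min; apply/andP; split; first by case/andP: (i_p I u).
have d0 : 0 < dd st by lra.
rewrite ler_pdivlMr //.
have hm : - Vmax <= mS st u (jf st u).
  rewrite /mS; have := vge0 (u |: st_Scur st (jf st u)).
  have := Vmax_ge (st_Scur st (jf st u)); lra.
have : 0 <= Vmax * (dd st - 1) by apply: mulr_ge0; lra.
nra.
Qed.

Lemma m_le_single : mS st u (jf st u) <= v [set u].
Proof.
have := vsub (sub0set (st_Scur st (jf st u))) (u_notin_cur jf_lt).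
by rewrite setU0 v0 subr0.
Qed.

Lemma single_ok : psum (pf st u) [set u] <= B /\ 0 <= v [set u] - psum (pf st u) [set u].
Proof.
rewrite psum1 /pf eqxx; split.
  apply: le_trans qf_le_p _; by case/andP: (i_p I u).
have := qf_le_m; have := m_le_single; have := dd_gt1; have := vge0 [set u].
set q := qf st u; set d := dd st; set m := mS st u (jf st u) => h1 h2 h3 h4.
case: (lerP q 0) => hq; first by lra.
have : 0 <= q * (d - 1) by apply: mulr_ge0; lra.
nra.
Qed.

Lemma cur_same i : (i < l)%N -> goodC (st_rho st) (pf st u) (st_Scur st i).
Proof. by move=> hi; rewrite /goodC psum_pf ?u_notin_cur //; exact: (i_cur I hi). Qed.

Lemma ustar_same : psum (pf st u) (st_ustar st) <= B /\
    0 <= v (st_ustar st) - psum (pf st u) (st_ustar st).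
Proof. by rewrite psum_pf ?u_notin_ustar //; exact: (i_ustar I). Qed.

Lemma cur_add : ~~ (st_rho st < v (u |: st_Scur st (jf st u)) -
                   psum (pf st u) (u |: st_Scur st (jf st u))) ->
  goodC (st_rho st) (pf st u) (u |: st_Scur st (jf st u)).
Proof.
rewrite -leNgt => hc; split => //.
have hu := u_notin_cur jf_lt.
rewrite psumU1 // psum_pf // {1}/pf eqxx.
have h2 := qf_le_m; case: (i_cur I jf_lt) => h1 _.
move: h1 h2; rewrite /mS /dd.
set q := qf st u; set P := psum _ _; set d := beta + _ ; move=> h1 h2.
rewrite mulrDr [d * q]mulrC; lra.
Qed.

End StepFacts.

Definition flagged (st : state R n) := exists j u, [/\ (j < l)%N, u \notin st_Scur st j,
  st_ustar st = [set u] &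
  st_rho st < v (u |: st_Scur st j) - psum (st_p st) (u |: st_Scur st j)].

Definition KK := (2 * l + 2)%N.

Record FI (sig : profile R n) (s0 : state R n) (todo : seq 'I_n)
          (sd : state R n * bool) (rem : seq 'I_n) : Prop := {
  fi_inv : Inv sig sd.1;
  fi_rho : st_rho sd.1 = st_rho s0;
  fi_prev : st_Sprev sd.1 = st_Sprev s0;
  fi_uniq : uniq rem;
  fi_disj : forall w, w \in rem -> ~ inSets sd.1 w;
  fi_inR : forall w, w \in rem -> w \in st_R sd.1;
  fi_cov : ~~ sd.2 -> forall w, w \in st_R sd.1 -> w \in rem \/
     w \in unionS l (st_Sprev sd.1) :|: unionS l (st_Scur sd.1) :|: st_ustar sd.1;
  fi_flag : sd.2 -> flagged sd.1;
  fi_steps : (st_steps sd.1 + KK * size rem <= st_steps s0 + KK * size todo)%N }.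

Lemma fi_step sig s0 todo sd u rem :
  FI sig s0 todo sd (u :: rem) -> FI sig s0 todo (process v B beta l sig sd u) rem.
Proof.
case: sd => st done F.
have urem : u \notin rem by have := fi_uniq F; rewrite cons_uniq => /andP [].
have unS : ~ inSets st u.
  by apply: (fi_disj F); rewrite inE eqxx.
have uR : u \in st_R st by apply: (fi_inR F); rewrite inE eqxx.
have I : Inv sig st := fi_inv F.
have stp : (st_steps st + KK * size (u :: rem) <= st_steps s0 + KK * size todo)%N
  := fi_steps F.
case: done F => F.
  split => //=; try exact: (fi_inv F); try exact: (fi_rho F); try exact: (fi_prev F).
  - by have := fi_uniq F; rewrite cons_uniq => /andP [].
  - by move=> w hw; apply: (fi_disj F); rewrite inE hw orbT.
  - by move=> w hw; apply: (fi_inR F); rewrite inE hw orbT.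
  - exact: (fi_flag F).
  - by apply: leq_trans stp; rewrite /= leq_add2l leq_mul2l leqnSn orbT.
rewrite processE.
case ha : (sig u (st_hist st) (qf st u)).
- rewrite /pg /=. case: ifP => hc.
  + have I' : Inv sig (St (rcons (st_hist st) (u, qf st u, true)) (pf st u) (st_R st)
       [set u] (st_Sprev st) (st_Scur st) (st_rho st) (st_steps st + 2 * l + 1).+1).
      apply: (inv_step I uR unS ha) => //.
      * move=> w [[i hi hw]|[[i hi hw]|hw]] /=.
        - by left; left; exists i.
        - by left; right; left; exists i.
        - by right; split => //; move/set1P: hw.
      * by move=> i hi /=; exact: (cur_same I unS hi).
      * exact: (single_ok I unS).
      * exact: (qf_ge u I).
    split => //=.
    * exact: (fi_rho F).
    * exact: (fi_prev F).
    * by have := fi_uniq F; rewrite cons_uniq => /andP [].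
    * move=> w hw [[i hi hw']|[[i hi hw']|hw']] /=.
      - by apply: (fi_disj F (w := w)); [rewrite inE hw orbT | left; exists i].
      - by apply: (fi_disj F (w := w)); [rewrite inE hw orbT | right; left; exists i].
      - by move/set1P: hw' => ?; subst w; rewrite hw in urem.
    * by move=> w hw; apply: (fi_inR F); rewrite inE hw orbT.
    * move=> _; exists (jf st u), u; split => //; first exact: jf_lt.
      exact: (u_notin_cur unS (jf_lt st u)).
    * apply: leq_trans stp; rewrite /= /KK mulnS; lia.
  + have hj := jf_lt st u.
    have I' : Inv sig (St (rcons (st_hist st) (u, qf st u, true)) (pf st u) (st_R st)
       (st_ustar st) (st_Sprev st)
       (fun i => if i == jf st u then u |: st_Scur st i else st_Scur st i)
       (st_rho st) (st_steps st + 2 * l + 1).+1).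
      apply: (inv_step I uR unS ha) => //.
      * move=> w [[i hi hw]|[[i hi hw]|hw]] /=.
        - by left; left; exists i.
        - move: hw => /=; case: ifP => [/eqP ->|_] hw; last by left; right; left; exists i.
          case/setU1P: hw => [->|hw]; first by right.
          by left; right; left; exists (jf st u).
        - by left; right; right.
      * move=> i hi /=; case: ifP => [/eqP ->|_]; last exact: (cur_same I unS hi).
        by apply: (cur_add I unS); rewrite hc.
      * exact: (ustar_same I unS).
      * exact: (qf_ge u I).
    split => //=.
    * exact: (fi_rho F).
    * exact: (fi_prev F).
    * by have := fi_uniq F; rewrite cons_uniq => /andP [].
    * move=> w hw [[i hi hw']|[[i hi hw']|hw']] /=.
      - by apply: (fi_disj F (w := w)); [rewrite inE hw orbT | left; exists i].
      - move: hw' => /=; case: ifP => [/eqP ->|_] hw'.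
          case/setU1P: hw' => [?|hw']; first by subst w; rewrite hw in urem.
          by apply: (fi_disj F (w := w)); [rewrite inE hw orbT | right; left; exists (jf st u)].
        by apply: (fi_disj F (w := w)); [rewrite inE hw orbT | right; left; exists i].
      - by apply: (fi_disj F (w := w)); [rewrite inE hw orbT | right; right].
    * by move=> w hw; apply: (fi_inR F); rewrite inE hw orbT.
    * move=> _ w hw; case: (fi_cov F isT hw) => [|h].
        rewrite inE => /orP [/eqP ->|->]; last by left.
        right; rewrite !inE; apply/orP; left; apply/orP; right.
        apply/unionSP; exists (jf st u) => //=; by rewrite eqxx setU11.
      right; move: h; rewrite !inE /= => /orP [/orP [h|h]|->]; last by rewrite orbT.
        by rewrite h.
      apply/orP; left; apply/orP; right; case/unionSP: h => i hi hw'.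
      apply/unionSP; exists i => //=; case: ifP => // _; by rewrite setU1r.
    * apply: leq_trans stp; rewrite /= /KK mulnS; lia.
- have I' : Inv sig (pg false st u).1.
    apply: (inv_step I uR unS ha) => //.
    * by move=> w; left.
    * by move=> i hi /=; exact: (cur_same I unS hi).
    * exact: (ustar_same I unS).
    * exact: (qf_ge u I).
  split => //=.
  * exact: (fi_rho F).
  * exact: (fi_prev F).
  * by have := fi_uniq F; rewrite cons_uniq => /andP [].
  * by move=> w hw; apply: (fi_disj F); rewrite inE hw orbT.
  * move=> w hw; rewrite !inE (fi_inR F) ?andbT; last by rewrite inE hw orbT.
    by apply/eqP => ?; subst w; rewrite hw in urem.
  * move=> _ w; rewrite !inE => /andP [wu hw]; case: (fi_cov F isT hw) => [|h].
      by rewrite inE (negbTE wu) /= => ->; left.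
    by right; rewrite !inE in h.
  * apply: leq_trans stp; rewrite /= /KK mulnS; lia.
Qed.


Lemma fold_fi sig s0 todo rem sd : FI sig s0 todo sd rem ->
  FI sig s0 todo (foldl (process v B beta l sig) sd rem) [::].
Proof. by elim: rem sd => [|u rem IH] sd F //=; apply: IH; exact: fi_step. Qed.

Lemma goodC0 rho p : 0 <= rho -> goodC rho p set0.
Proof. by move=> r0; rewrite /goodC psum0 v0 mulr0 subr0. Qed.

Lemma round_inv sig st : Inv sig st ->
  [/\ Inv sig (round v B alpha beta l sig st),
      st_rho (round v B alpha beta l sig st) = alpha * st_rho st,
      stopped l (round v B alpha beta l sig st) \/ flagged (round v B alpha beta l sig st) &
      (st_steps (round v B alpha beta l sig st) <= st_steps st + KK * n)%N].
Proof.
move=> I; rewrite roundE.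
have a0 : 0 < alpha by have := alpha1; lra.
have F0 : FI sig (s0_of st) (todo_of st) (s0_of st, false) (todo_of st).
  have I0 : Inv sig (s0_of st).
    split => //=; try exact: (i_p I); try exact: (i_ustar I); try exact: (i_hist I);
      try exact: (i_price I); try exact: (i_rej I).
    - by rewrite mulr_gt0 // (i_rho I).
    - by move=> i hi; apply: goodC_E (i_rho I) (i_cur I hi).
    - by move=> i hi; apply: goodC0; rewrite ltW // mulr_gt0 // (i_rho I).
    - move=> w [[i hi hw]|[[i hi hw]|hw]] /=.
      + by apply: (i_inR I); right; left; exists i.
      + by rewrite inE in hw.
      + by apply: (i_inR I); right; right.
    - move=> w [[i hi hw]|[[i hi hw]|hw]] /=.
      + by apply: (i_acc I); right; left; exists i.
      + by rewrite inE in hw.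
      + by apply: (i_acc I); right; right.
  split => //=.
  - by rewrite /todo_of filter_uniq // enum_uniq.
  - move=> w; rewrite /todo_of mem_filter !inE => /andP [/andP [hn _] _].
    move=> [[i hi hw]|[[i hi hw]|hw]] /=.
    + by move: hn; rewrite negb_or => /andP [/negP []]; apply/unionSP; exists i.
    + by rewrite inE in hw.
    + by move: hn; rewrite negb_or hw andbF.
  - by move=> w; rewrite /todo_of mem_filter !inE => /andP [/andP [_ ->] _].
  - move=> _ w hw; case hu: (w \in unionS l (st_Scur st) :|: st_ustar st).
      by right; move: hu; rewrite !inE => /orP [->|->]; rewrite ?orbT.
    by left; rewrite /todo_of mem_filter mem_enum !inE andbT hw andbT; rewrite !inE in hu; rewrite hu.
have F := fold_fi F0.
move: F; case: (foldl _ _ _) => st' done F /=.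
have hs : (size (todo_of st) <= n)%N.
  by rewrite /todo_of size_filter; apply: leq_trans (count_size _ _) _; rewrite size_enum_ord.
split.
- exact: (fi_inv F).
- exact: (fi_rho F).
- case: done F => F; first by right; exact: (fi_flag F).
  left; rewrite /stopped setD_eq0; apply/subsetP => w hw.
  by case: (fi_cov F isT hw).
- have := fi_steps F; rewrite /= muln0 addn0 => h; apply: leq_trans h _.
  by rewrite leq_add2l leq_mul2l hs orbT.
Qed.


Record SI (sig : profile R n) (st : state R n) (rem : seq 'I_n) : Prop := {
  si_hist : hist_ok sig (st_hist st);
  si_ev : forall e, e \in st_hist st -> e.1.2 = B /\ e.1.1 \notin rem;
  si_rej : forall w q, (w, q, false) \in st_hist st -> w \notin st_R st;
  si_notR : forall w, w \in rem -> w \notin st_R st;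
  si_uniq : uniq rem;
  si_steps : (st_steps st + size rem = n)%N }.

Lemma si_step sig st u rem : SI sig st (u :: rem) -> SI sig (step1_one B sig st u) rem.
Proof.
move=> S; rewrite step1E.
have [urem ur] : u \notin rem /\ uniq rem by have := si_uniq S; rewrite cons_uniq => /andP.
have uR : u \notin st_R st by apply: (si_notR S); rewrite inE eqxx.
split => /=.
- by apply: hist_ok_rcons => //; exact: (si_hist S).
- move=> e; rewrite mem_rcons in_cons => /orP [/eqP -> //|he].
  have [-> hn] := si_ev S he; split => //; move: hn; rewrite inE negb_or.
  by case/andP.
- move=> w q; rewrite mem_rcons in_cons => /orP [/eqP [-> _ <-] //|he].
  have hn := si_rej S he; case: (sig _ _ _) => //; rewrite !inE negb_or hn andbT.
  have [_] := si_ev S he; rewrite /= inE negb_or => /andP [] //.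
- move=> w hw; have := si_notR S (w := w); rewrite inE hw orbT => /(_ isT) hn.
  case: (sig _ _ _) => //; rewrite !inE negb_or hn andbT.
  by apply/eqP => ?; subst w; rewrite hw in urem.
- exact: ur.
- by have := si_steps S; rewrite /= addSnnS.
Qed.

Lemma si_fold sig st rem : SI sig st rem -> SI sig (foldl (step1_one B sig) st rem) [::].
Proof. by elim: rem st => [|u rem IH] st S //=; apply: IH; exact: si_step. Qed.

Lemma step1_fields (sig : profile R n) (rem : seq 'I_n) (st : state R n) :
  let st' := foldl (step1_one B sig) st rem in
  [/\ st_p st' = st_p st, st_ustar st' = st_ustar st, st_Sprev st' = st_Sprev st,
      st_Scur st' = st_Scur st & st_rho st' = st_rho st].
Proof. by elim: rem st => [|u rem IH] st //=; have [-> -> -> -> ->] := IH (step1_one B sig st u). Qed.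

Lemma init_inv sig : let st := init_state B alpha eps sig in
  [/\ Inv sig st, st_rho st = eps / alpha & st_steps st = n].
Proof.
have a0 : 0 < alpha by have := alpha1; lra.
have S0 : SI sig (St [::] (fun _ => B) set0 set0 (fun _ => set0) (fun _ => set0)
        (eps / alpha) 0%N) (enum 'I_n).
  split => //=; first exact: hist_ok_nil.
  - by move=> w; rewrite inE.
  - exact: enum_uniq.
  - by rewrite size_enum_ord.
have S := si_fold S0.
rewrite /init_state.
have [ep eu eP eS er] := step1_fields sig (enum 'I_n) (St [::] (fun _ => B) set0 set0
        (fun _ => set0) (fun _ => set0) (eps / alpha) 0%N).
move: S ep eu eP eS er; set st := foldl _ _ _ => S ep eu eP eS er /=.
have noS : forall w, ~ inSets st w.
  by move=> w [[i _]|[[i _]|]]; rewrite ?eP ?eS ?eu inE.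
split => //.
- split.
  + by rewrite er divr_gt0.
  + move=> w; rewrite ep /=; have := Vmax_ge0; have := B0; move=> *; apply/andP; split; lra.
  + by move=> i _; rewrite eP; exists 1; rewrite psum0 v0 mulr0 subr0; split.
  + move=> i _; rewrite eS; apply: goodC0; rewrite er; apply: ltW; exact: divr_gt0.
  + by rewrite eu psum0 v0 subr0; split => //; exact: ltW.
  + exact: (si_hist S).
  + by move=> w q a he; rewrite ep; have [/= ->] := si_ev S he.
  + exact: (si_rej S).
  + by move=> w /noS.
  + by move=> w /noS.
- by have := si_steps S; rewrite addn0.
Qed.

Lemma state_facts sig t : let st := state_after v B alpha beta eps l sig t in
  [/\ Inv sig st, st_rho st = eps / alpha * alpha ^+ t,
      (st_steps st <= n + t * (KK * n))%N &
      (0 < t)%N -> stopped l st \/ flagged st].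
Proof.
elim: t => [|t [I er es _]] /=.
  by have [I er es] := init_inv sig; split; rewrite ?expr0 ?mulr1 ?es ?addn0.
have [I' er' sf es'] := round_inv I.
split => //.
- by rewrite er' er exprS; ring.
- move: es es'; rewrite mulSn; set X := (t * _)%N; set Y := (KK * n)%N; lia.
Qed.


Definition ext (H H' : history R n) := exists s, H' = H ++ s.

Lemma ext_refl H : ext H H. Proof. by exists [::]; rewrite cats0. Qed.
Lemma ext_trans H1 H2 H3 : ext H1 H2 -> ext H2 H3 -> ext H1 H3.
Proof. by move=> [s1 ->] [s2 ->]; exists (s1 ++ s2); rewrite catA. Qed.
Lemma ext_rcons H e : ext H (rcons H e). Proof. by exists [:: e]; rewrite cats1. Qed.
Lemma hist_ok_ext sig H H' : ext H H' -> hist_ok sig H' -> hist_ok sig H.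
Proof. by move=> [s ->]; apply: hist_ok_cat. Qed.

Lemma pg_hist a st u : st_hist (pg a st u).1 = rcons (st_hist st) (u, qf st u, a).
Proof. by rewrite /pg; case: a => //=; case: ifP. Qed.

Lemma pr_ext sig sd u :
  ext (st_hist sd.1) (st_hist (process v B beta l sig sd u).1).
Proof.
case: sd => st []; first exact: ext_refl.
by rewrite processE pg_hist; exists [:: (u, qf st u, sig u (st_hist st) (qf st u))]; rewrite cats1.
Qed.

Lemma pr_det sigA sigB sd u :
  hist_ok sigA (st_hist (process v B beta l sigB sd u).1) ->
  process v B beta l sigA sd u = process v B beta l sigB sd u.
Proof.
case: sd => st []; first by move=> _.
rewrite !processE pg_hist => h.
by have := h (st_hist st) (u, qf st u, sigB u (st_hist st) (qf st u)) [::];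
  rewrite cats1 => /(_ erefl) /= ->.
Qed.

Lemma s1_det (sigA sigB : profile R n) (st : state R n) u :
  hist_ok sigA (st_hist (step1_one B sigB st u)) ->
  step1_one B sigA st u = step1_one B sigB st u.
Proof.
rewrite !step1E /= => h.
by have := h (st_hist st) (u, B, sigB u (st_hist st) B) [::];
  rewrite cats1 => /(_ erefl) /= ->.
Qed.

Lemma foldl_ext_gen (X Y : Type) (hX : X -> history R n) (F : X -> Y -> X) :
  (forall x y, ext (hX x) (hX (F x y))) ->
  forall s x, ext (hX x) (hX (foldl F x s)).
Proof.
move=> hF; elim=> [|y s IH] x /=; first exact: ext_refl.
exact: ext_trans (hF x y) (IH _).
Qed.

Lemma foldl_det_gen (X Y : Type) (hX : X -> history R n) (FA FB : X -> Y -> X) sigA :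
  (forall x y, ext (hX x) (hX (FB x y))) ->
  (forall x y, hist_ok sigA (hX (FB x y)) -> FA x y = FB x y) ->
  forall s x, hist_ok sigA (hX (foldl FB x s)) -> foldl FA x s = foldl FB x s.
Proof.
move=> hE hD; elim=> [|y s IH] x //= h.
have h1 : hist_ok sigA (hX (FB x y)).
  exact: hist_ok_ext (foldl_ext_gen hE s (FB x y)) h.
by rewrite (hD _ _ h1); apply: IH.
Qed.

Lemma round_ext (sig : profile R n) st : ext (st_hist st) (st_hist (round v B alpha beta l sig st)).
Proof.
rewrite roundE.
exact: (@foldl_ext_gen _ _ (fun sd => st_hist sd.1) _ (@pr_ext sig) _ (s0_of st, false)).
Qed.

Lemma round_det sigA sigB st :
  hist_ok sigA (st_hist (round v B alpha beta l sigB st)) ->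
  round v B alpha beta l sigA st = round v B alpha beta l sigB st.
Proof.
rewrite !roundE => h.
by rewrite (@foldl_det_gen _ _ (fun sd => st_hist sd.1) _ _ sigA (@pr_ext sigB)
   (@pr_det sigA sigB) _ _ h).
Qed.

Lemma init_det (sigA sigB : profile R n) :
  hist_ok sigA (st_hist (init_state B alpha eps sigB)) ->
  init_state B alpha eps sigA = init_state B alpha eps sigB.
Proof.
rewrite /init_state => h.
have hD : forall x y, hist_ok sigA (st_hist (step1_one B sigB x y)) ->
    step1_one B sigA x y = step1_one B sigB x y by move=> x y; apply: s1_det.
have hE : forall x y, ext (st_hist x) (st_hist (step1_one B sigB x y)).
  by move=> x y; rewrite step1E; exists [:: (y, B, sigB y (st_hist x) B)]; rewrite cats1.
exact: (foldl_det_gen hE hD h).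
Qed.

Lemma sa_ext (sig : profile R n) t1 t2 : (t1 <= t2)%N ->
  ext (st_hist (state_after v B alpha beta eps l sig t1))
      (st_hist (state_after v B alpha beta eps l sig t2)).
Proof.
move/subnK => <-; elim: (t2 - t1)%N => [|k IH]; first exact: ext_refl.
rewrite addSn; apply: ext_trans IH _; exact: round_ext.
Qed.

Lemma sa_det sigA sigB t :
  hist_ok sigA (st_hist (state_after v B alpha beta eps l sigB t)) ->
  state_after v B alpha beta eps l sigA t = state_after v B alpha beta eps l sigB t.
Proof.
elim: t => [|t IH] h; first exact: init_det.
have h1 := hist_ok_ext (round_ext sigB _) h.
rewrite /state_after /= -/(state_after v B alpha beta eps l sigA t)
  -/(state_after v B alpha beta eps l sigB t) (IH h1).
exact: round_det.
Qed.


Lemma foldl_best_prop (P : {set 'I_n} -> Prop) (f : {set 'I_n} -> {set 'I_n} -> bool) x0 s :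
  P x0 -> (forall X, X \in s -> P X) ->
  P (foldl (fun X A => if f X A then A else X) x0 s).
Proof.
elim: s x0 => [|y s IH] x0 //= h0 hs; apply: IH.
  by case: ifP => // _; apply: hs; rewrite inE eqxx.
by move=> X hX; apply: hs; rewrite inE hX orbT.
Qed.

Lemma best_prop (st : state R n) (P : {set 'I_n} -> Prop) :
  P set0 -> (forall X, X \in candidates l st -> P X) -> P (best v l st).
Proof.
move=> h0 hc; rewrite /best; apply: foldl_best_prop.
  case E: (candidates l st) => [|y s] //=; apply: hc; rewrite E inE eqxx //.
move=> X hX; apply: hc; case E: (candidates l st) hX => [|y s] //= hX.
by rewrite inE hX orbT.
Qed.

Lemma cand_mem (st : state R n) X : X \in candidates l st ->
  (exists2 i, (i < l)%N & X = st_Sprev st i) \/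
  (exists2 i, (i < l)%N & X = st_Scur st i) \/ X = st_ustar st.
Proof.
rewrite /candidates !mem_cat => /orP [/mapP [i]|/orP [/mapP [i]|]].
- by rewrite mem_iota add0n => /andP [_ hi] ->; left; exists i.
- by rewrite mem_iota add0n => /andP [_ hi] ->; right; left; exists i.
- by rewrite inE => /eqP ->; right; right.
Qed.

Lemma best_facts sig (st : state R n) : Inv sig st ->
  let W := best v l st in
  [/\ psum (st_p st) W <= B, 0 <= v W - psum (st_p st) W &
      forall w, w \in W -> inSets st w].
Proof.
move=> I /=; apply: (best_prop (P := fun W => [/\ psum (st_p st) W <= B,
    0 <= v W - psum (st_p st) W & forall w, w \in W -> inSets st w])).
  by rewrite psum0 v0 subr0 lexx ltW //; split => // w; rewrite inE.
move=> X /cand_mem [[i hi ->]|[[i hi ->]|->]].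
- have [h1 h2] := goodE_bounds (i_prev I hi); split => // w hw.
  by left; exists i.
- have [h1 h2] := goodE_bounds (goodC_E (i_rho I) (i_cur I hi)); split => // w hw.
  by right; left; exists i.
- have [h1 h2] := i_ustar I; split => // w hw; by right; right.
Qed.

Lemma bernoulli (a : R) t : 1 <= a -> 1 + t%:R * (a - 1) <= a ^+ t.
Proof.
move=> a1; elim: t => [|t IH]; first by rewrite mul0r addr0 expr0.
rewrite exprS -natr1.
have a0 : 0 <= a by apply: le_trans a1.
apply: le_trans (ler_wpM2l a0 IH).
have -> : a * (1 + t%:R * (a - 1)) =
  1 + (t%:R + 1) * (a - 1) + t%:R * (a - 1) * (a - 1) by ring.
rewrite lerDl mulr_ge0 // ?mulr_ge0 // subr_ge0 //.
Qed.

Lemma flagged_bound sig (st : state R n) : Inv sig st -> flagged st ->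
  st_rho st < Vmax + Vmax *+ n.
Proof.
move=> I [j [u [hj hu _ hr]]].
move: hr; set X := u |: st_Scur st j => hr; clearbody X.
have h1 := Vmax_ge X.
have h2 : - (Vmax *+ n) <= psum (st_p st) X.
  have h3 : \sum_(w in X) (- Vmax) <= psum (st_p st) X.
    by apply: ler_sum => w _; case/andP: (i_p I w).
  have h4 : - (Vmax *+ n) <= \sum_(w in X) (- Vmax).
    rewrite sumr_const mulNrn lerN2; apply: (ler_wpMn2l Vmax_ge0).
    by apply: leq_trans (max_card _) _; rewrite card_ord.
  exact: le_trans h4 h3.
lra.
Qed.


Lemma term : terminates v B alpha beta eps l.
Proof.
move=> sig.
have a1 := alpha1; have e0 := eps0.
have V0 := Vmax_ge0.
set K := Vmax + Vmax *+ n.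
have K0 : 0 <= K by rewrite /K addr_ge0 // mulrn_wge0.
set e := eps / alpha.
have ep : 0 < e by rewrite /e divr_gt0 //; lra.
have d0 : 0 < e * (alpha - 1) by rewrite mulr_gt0 //; lra.
set x := K / (e * (alpha - 1)).
have x0 : 0 <= x by rewrite /x divr_ge0 // ltW.
have Kx : K = x * (e * (alpha - 1)) by rewrite /x divfK // gt_eqF.
set t := (Num.Def.archi_bound x).+1.
have ht : x < t%:R.
  apply: lt_le_trans (archi_boundP x0) _; by rewrite ler_nat.
have hst : stopped l (state_after v B alpha beta eps l sig t).
  have [I er _ hsf] := state_facts sig t.
  case: (hsf isT) => // hf; exfalso.
  have := flagged_bound I hf; rewrite er -/e.
  have hb := bernoulli t (ltW alpha1).
  have h1 := ler_wpM2l (ltW ep) hb.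
  have h2 : x * (e * (alpha - 1)) < t%:R * (e * (alpha - 1)) by rewrite ltr_pM2r.
  have hK : K < e * alpha ^+ t.
    rewrite Kx; apply: lt_le_trans h2 _; apply: le_trans _ h1.
    have -> : e * (1 + t%:R * (alpha - 1)) = e + t%:R * (e * (alpha - 1)) by ring.
    by rewrite lerDr ltW.
  rewrite -/K => hk; have := lt_trans hk hK; by rewrite ltxx.
have exP : exists t, (0 < t)%N && stopped l (state_after v B alpha beta eps l sig t).
  by exists t; rewrite hst.
case: (ex_minnP exP) => M /andP [M0 hM] hmin.
exists M; split => //; split => // k /andP [k0 kM]; apply/negP => hk.
by have := hmin k; rewrite k0 hk => /(_ isT); rewrite leqNgt kM.
Qed.

Lemma winners_facts sig M :
  let st := state_after v B alpha beta eps l sig M in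
  let W := winners v B alpha beta eps l sig M in
  [/\ psum (payment v B alpha beta eps l sig M) W <= B,
      0 <= v W - psum (payment v B alpha beta eps l sig M) W,
      forall w, w \in W -> (w, st_p st w, true) \in st_hist st,
      forall w q, (w, q, false) \in st_hist st -> w \notin W &
      forall w q a, (w, q, a) \in st_hist st -> st_p st w <= q].
Proof.
have [I _ _ _] := state_facts sig M.
have [h1 h2 h3] := best_facts I.
split => //.
- by move=> w /h3; apply: (i_acc I).
- move=> w q hq; apply/negP => /h3 /(i_inR I); by rewrite (negbTE (i_rej I hq)).
- exact: (i_price I).
Qed.

Lemma budget : budget_feasible v B alpha beta eps l.
Proof. by move=> sig M _; have [] := winners_facts sig M. Qed.

Lemma nonneg : nonneg_surplus v B alpha beta eps l.
Proof. by move=> sig M _; have [] := winners_facts sig M. Qed.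

Variable c : 'I_n -> R.

Lemma IR_any sig i M : sig i = truthful c i ->
  0 <= utility v c B alpha beta eps l sig M i.
Proof.
move=> hs; rewrite /utility; case: ifP => // hi.
have [_ _ h3 _ _] := winners_facts sig M.
have [I _ _ _] := state_facts sig M.
have [H1 hH] := hist_ok_mem (i_hist I) (h3 i hi).
by move: hH; rewrite hs /truthful /payment subr_ge0.
Qed.

Lemma IR : individually_rational v c B alpha beta eps l.
Proof. by move=> sig i M hs _; apply: IR_any. Qed.

Lemma util_rej sig M i q : (i, q, false) \in st_hist (state_after v B alpha beta eps l sig M) ->
  utility v c B alpha beta eps l sig M i = 0.
Proof.
move=> h; have [_ _ _ h4 _] := winners_facts sig M.
by rewrite /utility (negbTE (h4 _ _ h)).
Qed.

Lemma util_acc sig M i q a : (i, q, a) \in st_hist (state_after v B alpha beta eps l sig M) ->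
  q < c i -> utility v c B alpha beta eps l sig M i <= 0.
Proof.
move=> h hq; have [_ _ _ _ h5] := winners_facts sig M.
rewrite /utility; case: ifP => // _; rewrite /payment subr_le0.
exact: ltW (le_lt_trans (h5 _ _ _ h) hq).
Qed.

Lemma osp : obviously_strategyproof v c B alpha beta eps l.
Proof.
move=> i s' sig1 sig2 M1 M2 h q hs1 hs2 _ _ [a1 [r1 e1]] [a2 [r2 e2]] hd.
have [I1 _ _ _] := state_facts sig1 M1.
have [I2 _ _ _] := state_facts sig2 M2.
have ha1 : sig1 i h q = a1.
  move: (i_hist I1) => /(_ h (i, q, a1) r1) /=; apply.
  by rewrite /final_history in e1; rewrite e1 cat_rcons.
have ha2 : sig2 i h q = a2.
  move: (i_hist I2) => /(_ h (i, q, a2) r2) /=; apply.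
  by rewrite /final_history in e2; rewrite e2 cat_rcons.
have m1 : (i, q, a1) \in st_hist (state_after v B alpha beta eps l sig1 M1).
  by rewrite /final_history in e1; rewrite e1 mem_cat mem_rcons inE eqxx.
have m2 : (i, q, a2) \in st_hist (state_after v B alpha beta eps l sig2 M2).
  by rewrite /final_history in e2; rewrite e2 mem_cat mem_rcons inE eqxx.
rewrite hs1 /truthful in ha1; rewrite -hs2 ha2 /truthful in hd.
case: (lerP (c i) q) => hc.
- rewrite hc in hd; move: hd m2; case: (a2) => // _ m2.
  by rewrite (util_rej m2); apply: IR_any.
- rewrite leNgt hc /= in ha1; rewrite -ha1 in m1.
  rewrite (util_rej m1); exact: util_acc m2 hc.
Qed.


Lemma truth : truthful_mech v c B alpha beta eps l.
Proof.
move=> sig i s' M1 M2 f1 f2.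
set sig1 := upd sig i (truthful c i); set sig2 := upd sig i s'.
have hs1 : sig1 i = truthful c i by rewrite /sig1 /upd eqxx.
have [I2 _ _ _] := state_facts sig2 M2.
set H2 := st_hist (state_after v B alpha beta eps l sig2 M2) in I2 *.
case: (boolP (has (fun e : event R n => (e.1.1 == i) && (e.2 != (c i <= e.1.2))) H2)).
  case/hasP => [[[w q] a] hm /= /andP [/eqP wi hne]]; subst w.
  have u1 := IR_any M1 hs1.
  case: a hm hne => hm hne.
    have hq : q < c i by rewrite ltNge; move: hne; case: (c i <= q).
    exact: le_trans (util_acc hm hq) u1.
  by rewrite (util_rej hm).
move=> hn.
have hok : hist_ok sig1 H2.
  move=> H1 e H3 E; have em : e \in H2 by rewrite E mem_cat inE eqxx orbT.
  rewrite /sig1 /upd; case: eqP => [ei|ne].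
    rewrite /truthful; have := hasPn hn e em; rewrite ei eqxx /= negbK.
    by move/eqP ->.
  have := i_hist I2 E; rewrite /sig2 /upd; case: eqP => //.
have eqt : forall t, (t <= M2)%N ->
    state_after v B alpha beta eps l sig1 t = state_after v B alpha beta eps l sig2 t.
  by move=> t ht; apply: sa_det; exact: hist_ok_ext (sa_ext sig2 ht) hok.
have eM : M1 = M2.
  case: f1 => [p1 [s1 n1]]; case: f2 => [p2 [s2 n2]].
  case: (ltngtP M1 M2) => // h.
  - have := n2 M1; rewrite p1 h => /(_ isT).
    by rewrite -(eqt M1 (ltnW h)) s1.
  - have := n1 M2; rewrite p2 h => /(_ isT).
    by rewrite (eqt M2 (leqnn _)) s2.
subst M1; rewrite /utility /winners /payment (eqt M2 (leqnn _)).
exact: lexx.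
Qed.

Lemma OPT_ge S : csum c S <= B -> v S - csum c S <= OPT v c B.
Proof.
move=> h; rewrite /OPT.
exact: (le_bigmax_cond 0 (P := fun S => csum c S <= B) (fun S => v S - csum c S) h).
Qed.

Lemma OPT_ge0 : 0 <= OPT v c B.
Proof.
have := @OPT_ge set0; rewrite /csum big_set0 v0 subr0; apply; exact: ltW.
Qed.

Lemma flagged_opt st : Inv (all_truthful c) st -> flagged st -> st_rho st < 2 * OPT v c B.
Proof.
move=> I [j [u [hj hu hus hr]]].
have acc w : inSets st w -> c w <= st_p st w.
  move=> hw; have [H1 hH] := hist_ok_mem (i_hist I) (i_acc I hw).
  by move: hH; rewrite /all_truthful /truthful.
have cu : c u <= st_p st u by apply: acc; right; right; rewrite hus inE.
have pu : st_p st u <= B by case/andP: (i_p I u).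
have hS : csum c (st_Scur st j) <= psum (st_p st) (st_Scur st j).
  by apply: ler_sum => w hw; apply: acc; right; left; exists j.
have [pS _] := goodE_bounds (goodC_E (i_rho I) (i_cur I hj)).
have o1 := OPT_ge (le_trans hS pS).
have o2 : v [set u] - c u <= OPT v c B.
  have := @OPT_ge [set u]; rewrite /csum big_set1; apply; exact: le_trans cu pu.
have sm := vsub (sub0set (st_Scur st j)) hu; rewrite setU0 v0 subr0 in sm.
rewrite psumU1 // in hr.
lra.
Qed.


Lemma M_bound M : first_stop v B alpha beta eps l (all_truthful c) M ->
  (M.+1)%:R <= (3 + (ln alpha)^-1) * (1 + ln (1 + OPT v c B / eps)).
Proof.
move=> [M0 [hM hmin]].
have la : 0 < ln alpha := ln_gt0 alpha1.
have ia : 0 < (ln alpha)^-1 by rewrite invr_gt0.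
have O0 := OPT_ge0.
have e0 := eps0.
set y := 1 + OPT v c B / eps.
have y1 : 1 <= y by rewrite /y lerDl divr_ge0 // ltW.
have L0 : 0 <= ln y := ln_ge0 y1.
set L := ln y in L0 *.
have hia : 0 <= (ln alpha)^-1 * (1 + L) by apply: mulr_ge0; [exact: ltW | lra].
case: M M0 hM hmin => [//|[|k]] _ hM hmin.
  have : 0 <= 3 * L by rewrite mulr_ge0.
  move: hia; set z := _ * _; move=> hia h3.
  rewrite mulrDl -/z; lra.
have hk : ~~ stopped l (state_after v B alpha beta eps l (all_truthful c) k.+1).
  by apply: hmin; rewrite /= ltnSn.
have [I er _ sf] := state_facts (all_truthful c) k.+1.
have hf : flagged (state_after v B alpha beta eps l (all_truthful c) k.+1).
  by case: (sf isT) => // h; rewrite h in hk.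
have := flagged_opt I hf; rewrite er exprS mulrA divfK; last first.
  by rewrite gt_eqF //; have := alpha1; lra.
move=> h1.
have ak : 0 < alpha ^+ k by rewrite exprn_gt0 //; have := alpha1; lra.
have h2 : alpha ^+ k < 2 * y.
  rewrite -(ltr_pM2l e0).
  have -> : eps * (2 * y) = 2 * eps + 2 * OPT v c B.
    by rewrite /y; field; rewrite gt_eqF.
  lra.
have h3 : ln (alpha ^+ k) < ln (2 * y).
  by rewrite ltr_ln // posrE // mulr_gt0 //; lra.
have a0 : 0 < alpha by have := alpha1; lra.
rewrite lnXn // lnM ?posrE // in h3; last by lra.
have l2 : ln (2 : R) <= 1.
  have := @le_ln1Dx R 1; rewrite (_ : 1 + 1 = 2) //; apply; lra.
rewrite -/L -mulr_natl in h3.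
have hk2 : k%:R < (1 + L) / ln alpha.
  rewrite ltr_pdivlMr // mulr_natl; rewrite mulr1 in h3; lra.
rewrite -addn3 natrD; lra.
Qed.


Lemma runtime : runtime_bound v c B alpha beta eps l (6 * (3 + (ln alpha)^-1)).
Proof.
move=> M f; have hb := M_bound f.
have [I _ es _] := state_facts (all_truthful c) M.
rewrite /total_steps.
set st := state_after _ _ _ _ _ _ _ _ in I es *.
have sc : size (candidates l st) = (l + l + 1)%N.
  rewrite /candidates !size_cat !size_map !size_iota /=; lia.
have nb : (st_steps st + size (candidates l st) <= 6 * n.+1 * M.+1)%N.
  rewrite sc; have hl2 : (l <= 2)%N by case: hl => ->.
  have h1 : (M * (KK * n) <= 6 * (M * n))%N.
    by rewrite mulnCA leq_mul2r; apply/orP; right; rewrite /KK; lia.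
  have h2 : (6 * n.+1 * M.+1 = 6 * (M * n) + 6 * n + 6 * M + 6)%N.
    by rewrite mulnA -!mulnA mulSn mulnS; ring.
  rewrite h2; move: es h1; set X := (M * n)%N; set Y := (M * (KK * n))%N; lia.
have nb' : ((st_steps st + size (candidates l st))%N%:R : R) <=
    6 * (n.+1)%:R * (M.+1)%:R by rewrite -!natrM ler_nat.
apply: le_trans nb' _.
have n0 : (0 : R) <= 6 * (n.+1)%:R by rewrite mulr_ge0.
have := ler_wpM2l n0 hb; set Z := (3 + _) * _.
have -> : 6 * (3 + (ln alpha)^-1) * (n.+1)%:R * (1 + ln (1 + OPT v c B / eps)) =
  6 * (n.+1)%:R * Z by rewrite /Z; ring.
by [].
Qed.

End Mech.

Theorem theorem4p1 (R : realType) (alpha : R) :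
  1 < alpha ->
  exists C : R, forall (n : nat) (v : {set 'I_n} -> R) (c : 'I_n -> R)
                       (B beta eps : R) (l : nat),
    v set0 = 0 -> (forall S, 0 <= v S) -> submodular v ->
    (forall u, 0 <= c u) ->
    0 < B -> 1 < beta -> 0 < eps -> (l = 1 \/ l = 2)%N ->
    [/\ terminates v B alpha beta eps l,
        budget_feasible v B alpha beta eps l,
        obviously_strategyproof v c B alpha beta eps l,
        truthful_mech v c B alpha beta eps l &
        [/\ individually_rational v c B alpha beta eps l,
             nonneg_surplus v B alpha beta eps l &
             runtime_bound v c B alpha beta eps l C]].
Proof.
move=> a1; exists (6 * (3 + (ln alpha)^-1)).
move=> n v c B beta eps l v0 vge0 vsub _ B0 b1 e0 hl.
split.
- exact: term.
- exact: budget.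
- exact: osp.
- exact: truth.
- split.
  + exact: IR.
  + exact: nonneg.
  + exact: runtime.
Qed.
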